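(* Let $\mathbb{K}$ be an ordered field, $V$ a finite-dimensional vector space over $\mathbb{K}$, and $\varphi:V\to V$ a $\mathbb{K}$-linear automorphism all of whose eigenvalues (roots of the characteristic polynomial, with multiplicity) lie in $\mathbb{K}$ and are positive. Then $\varphi$ is order-preserving: there is a subset $P\subset V$ with $V=P\sqcup\{0\}\sqcup(-P)$, $P+P\subset P$, and $\varphi(P)\subset P$.
   Context: An ordering on a field $\mathbb{K}$ is a subset $Q$ with $\mathbb{K}=Q\sqcup\{0\}\sqcup(-Q)$ and $Q$ closed under addition and multiplication; elements of $Q$ are called positive. *)

(* Defs.v *)
From HB Require Import structures.
From mathcomp Require Import all_boot all_order all_algebra.
Set Implicit Arguments. Unset Strict Implicit. Unset Printing Implicit Defensive.
Import Order.TTheory GRing.Theory Num.Theory.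
Local Open Scope ring_scope.

(* Characteristic polynomial of a linear endomorphism of a finite-dimensional
   vector space: the characteristic polynomial of its matrix in the canonical
   basis (vbasis fullv); it does not depend on the chosen basis. *)
Definition lchar_poly (K : fieldType) (V : vectType K) (f : 'End(V)) : {poly K} :=
  char_poly (passmx.mxof (vbasis fullv) (vbasis fullv) f).

(* Main.v *)
Require Import Defs.
From HB Require Import structures.
From mathcomp Require Import all_boot all_order all_algebra.
Set Implicit Arguments. Unset Strict Implicit. Unset Printing Implicit Defensive.
Import Order.TTheory GRing.Theory Num.Theory.
Local Open Scope ring_scope.

Section Gen.
Variables (K : realFieldType) (X : zmodType) (phi : X -> X).

Fixpoint pos (fs : seq ((X -> K) * K)) (v : X) : Prop :=
  match fs with
  | [::] => False
  | (f, c) :: fs' => 0 < f v \/ (f v = 0 /\ pos fs' v)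
  end.

Fixpoint Good (S : X -> Prop) (fs : seq ((X -> K) * K)) : Prop :=
  match fs with
  | [::] => forall v, S v -> v = 0
  | (f, c) :: fs' => [/\ 0 < c, (forall x y, f (x + y) = f x + f y),
       (forall v, S v -> f (phi v) = c * f v) &
       Good (fun v => S v /\ f v = 0) fs']
  end.

Lemma addf0 (f : X -> K) : (forall x y, f (x + y) = f x + f y) -> f 0 = 0.
Proof. by move=> H; apply/eqP; rewrite -(addrI (f 0) (_ : f 0 + f 0 = f 0 + 0)) // addr0 -H addr0. Qed.

Lemma addfN (f : X -> K) : (forall x y, f (x + y) = f x + f y) -> forall x, f (- x) = - f x.
Proof. move=> H x; apply/eqP; rewrite -addr_eq0 -H addNr; apply/eqP; exact: addf0. Qed.

Lemma L1 fs S : Good S fs -> forall v, S v -> pos fs v \/ v = 0 \/ pos fs (- v).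
Proof.
elim: fs S => [|[f c] fs IH] S /=; first by move=> H v /H; auto.
case=> c0 Hadd Hphi HG v Sv.
have [fneg|fpos|f0] := ltgtP (f v) 0.
- by right; right; left; rewrite (addfN Hadd) oppr_gt0.
- by left; left.
- have [H|[H|H]] := IH _ HG v (conj Sv f0); first by left; right.
  + by right; left.
  + by right; right; right; split => //; rewrite (addfN Hadd) f0 oppr0.
Qed.

Lemma L2 fs S : Good S fs -> forall v, pos fs v -> v <> 0.
Proof.
elim: fs S => [|[f c] fs IH] S //=.
case=> c0 Hadd Hphi HG v [H|[_ H]] v0; subst v.
- by rewrite (addf0 Hadd) ltxx in H.
- exact: (IH _ HG 0 H).
Qed.

Lemma L3 fs S : Good S fs -> forall v, pos fs v -> ~ pos fs (- v).
Proof.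
elim: fs S => [|[f c] fs IH] S //=.
case=> c0 Hadd Hphi HG v; rewrite (addfN Hadd) oppr_gt0.
case=> [H|[H1 H2]] [H'|[H1' H2']].
- by move: (lt_trans H' H); rewrite ltxx.
- by move/eqP: H1'; rewrite oppr_eq0 gt_eqF.
- by rewrite H1 ltxx in H'.
- exact: (IH _ HG v H2 H2').
Qed.

Lemma L4 fs S : Good S fs -> forall u v, pos fs u -> pos fs v -> pos fs (u + v).
Proof.
elim: fs S => [|[f c] fs IH] S //=.
case=> c0 Hadd Hphi HG u v; rewrite Hadd.
case=> [H|[H1 H2]] [H'|[H1' H2']].
- by left; rewrite addr_gt0.
- by left; rewrite H1' addr0.
- by left; rewrite H1 add0r.
- by right; rewrite H1 H1' addr0; split => //; exact: (IH _ HG).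
Qed.

Lemma L5 fs S : Good S fs -> (forall v, S v -> S (phi v)) ->
  forall v, S v -> pos fs v -> pos fs (phi v).
Proof.
elim: fs S => [|[f c] fs IH] S //=.
case=> c0 Hadd Hphi HG Scl v Sv.
case=> [H|[H1 H2]].
- by left; rewrite Hphi // mulr_gt0.
- right; rewrite Hphi // H1 mulr0; split => //.
  apply: (IH _ HG) => //.
  by move=> w [Sw fw]; split; [exact: Scl | rewrite Hphi // fw mulr0].
Qed.

End Gen.
Section Mx.
Variables (K : realFieldType) (n : nat) (A : 'M[K]_n).
Local Notation X := 'rV[K]_n.
Local Notation ph := (fun r : X => r *m A).

Lemma block (M : 'M[K]_n) (a : K) (ix : seq 'I_n) fs (S : X -> Prop) :
  0 < a -> (forall v, S v -> (v *m A) *m M = a *: (v *m M)) ->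
  (forall S' : X -> Prop, (forall v, S' v -> S v /\ (forall i, i \in ix -> (v *m M) 0 i = 0)) ->
     Good ph S' fs) ->
  Good ph S ([seq ((fun v : X => (v *m M) 0 i), a) | i <- ix] ++ fs).
Proof.
elim: ix S => [|i ix IH] S a0 HS Hfs /=.
  by apply: Hfs => v Sv; split.
split => //.
- by move=> x y; rewrite mulmxDl mxE.
- by move=> v Sv; rewrite HS // mxE.
apply: IH => //.
- by move=> v [Sv _]; exact: HS.
move=> S' HS'; apply: Hfs => v /HS' [[Sv fi] Hj]; split => // j.
by rewrite inE => /orP [/eqP -> // | /Hj].
Qed.

Fixpoint Q (s : seq K) : 'M[K]_n :=
  match s with [::] => 1%:M | a :: s' => (A - a%:M) *m Q s' end.

Fixpoint L (s : seq K) : seq ((X -> K) * K) :=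
  match s with
  | [::] => [::]
  | a :: s' => [seq ((fun v : X => (v *m Q s') 0 i), a) | i <- enum 'I_n] ++ L s'
  end.

Lemma GoodL s : all (fun a => 0 < a) s ->
  forall S : X -> Prop, (forall r, S r -> r *m Q s = 0) -> Good ph S (L s).
Proof.
elim: s => [|a s IH] /=.
  by move=> _ S H r /H; rewrite mulmx1.
case/andP => a0 hs S HS; apply: block => //.
  move=> v /HS; rewrite mulmxA mulmxBr mul_mx_scalar mulmxBl -scalemxAl.
  by move/eqP; rewrite subr_eq0 => /eqP.
move=> S' HS'; apply: IH => // r /HS' [_ H]; apply/rowP => i.
by rewrite [RHS]mxE H // mem_enum.
Qed.

End Mx.

Lemma Q_char (K : realFieldType) n (A : 'M[K]_n) s :
  char_poly A = \prod_(a <- s) ('X - a%:P) -> Q A s = 0.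
Proof.
case: n A => [|n] A.
  by move=> _; apply/matrixP => i; case: i.
move=> H; have := Cayley_Hamilton A; rewrite H rmorph_prod /=.
suff -> : Q A s = \prod_(a <- s) horner_mx A ('X - a%:P) by [].
elim: s {H} => [|a s IH] /=; first by rewrite big_nil.
by rewrite big_cons IH rmorphB /= horner_mx_X horner_mx_C mulmxE.
Qed.

Theorem mainTheorem6 (K : realFieldType) (V : vectType K) (phi : 'End(V))
  (phi_aut : bijective phi)
  (eig : exists2 s : seq K,
      lchar_poly phi = \prod_(a <- s) ('X - a%:P) & all (fun a => 0 < a) s) :
  exists P : V -> Prop,
    [/\ (forall v : V, P v \/ v = 0 \/ P (- v)),
        (forall v : V, P v -> v <> 0),
        (forall v : V, P v -> ~ P (- v)),
        (forall u v : V, P u -> P v -> P (u + v))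
      & (forall v : V, P v -> P (phi v))].
Proof.
case: eig => s Hs Hpos.
set e := vbasis (fullv : {vspace V}).
have eb : basis_of fullv e := vbasisP fullv.
set A := passmx.mxof e e phi.
have HQ : Q A s = 0 by apply: Q_char; exact: Hs.
have G : Good (fun r => r *m A) (fun _ => True) (L A s).
  by apply: GoodL => // r _; rewrite HQ mulmx0.
have Hphi v : passmx.rVof e (phi v) = passmx.rVof e v *m A.
  by rewrite (passmx.rVof_app e eb).
have rN v : passmx.rVof e (- v) = - passmx.rVof e v.
  by apply/rowP => i; rewrite !mxE raddfN.
have rD u v : passmx.rVof e (u + v) = passmx.rVof e u + passmx.rVof e v.
  by apply/rowP => i; rewrite !mxE raddfD.
have r0 : passmx.rVof e 0 = 0.
  by apply/rowP => i; rewrite !mxE raddf0.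
exists (fun v => pos (L A s) (passmx.rVof e v)); split.
- move=> v; have [H|[H|H]] := L1 G (v := passmx.rVof e v) I.
  + by left.
  + by right; left; apply/eqP; rewrite -(passmx.rVof_eq0 eb) H.
  + by right; right; rewrite rN.
- move=> v H v0; apply: (L2 G H); by rewrite v0 r0.
- by move=> v H; rewrite rN; exact: (L3 G H).
- by move=> u v Hu Hv; rewrite rD; exact: (L4 G Hu Hv).
- move=> v H; rewrite Hphi; exact: (L5 G (fun _ _ => I) I H).
Qed.
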